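(* Let $\Gamma=(V,\nu,\mu)$ be a fuzzy graph on $n\ge2$ vertices. Then $$\sigma^*(\Gamma)\le\frac{2\,\mathrm{ew}(\Gamma)^2}{n}\left(1-\frac2n\right),$$ with equality if and only if $\Gamma$ has exactly one positive fuzzy edge, with membership value $\mathrm{ew}(\Gamma)$, and all other memberships zero; that is, there are distinct vertices $u,v$ with $\mu(u,v)=\mathrm{ew}(\Gamma)$ and $\mu(x,y)=0$ for all other pairs $\{x,y\}\ne\{u,v\}$, so that the degree sequence is $\mathrm{ew}(\Gamma),\mathrm{ew}(\Gamma),0,\dots,0$ (with $n-2$ zeros).
   Context: A fuzzy graph $\Gamma=(V,\nu,\mu)$ consists of a finite vertex set $V$ with $|V|=n$, a map $\nu:V\to[0,1]$, and a symmetric map $\mu:V\times V\to[0,1]$ with $\mu(u,v)\le\min(\nu(u),\nu(v))$. The fuzzy degree is $d_\Gamma(v)=\sum_{u\ne v}\mu(v,u)$, the fuzzy size is $\mathrm{ew}(\Gamma)=\sum_{\{u,v\},u\ne v}\mu(u,v)$, $\lambda=2\,\mathrm{ew}(\Gamma)/n$, and the fuzzy sigma index is $\sigma^*(\Gamma)=\frac1n\sum_{v}(d_\Gamma(v)-\lambda)^2$. *)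

(* Defs.v *)
From HB Require Import structures.
From mathcomp Require Import all_boot all_order all_algebra.
Set Implicit Arguments. Unset Strict Implicit. Unset Printing Implicit Defensive.
Import Order.TTheory GRing.Theory Num.Theory.
Local Open Scope ring_scope.

Definition is_fuzzy_graph (R : realFieldType) (n : nat)
  (nu : 'I_n -> R) (mu : 'I_n -> 'I_n -> R) : Prop :=
  [/\ forall v, 0 <= nu v <= 1,
      forall u v, 0 <= mu u v <= 1,
      forall u v, mu u v = mu v u &
      forall u v, mu u v <= Num.min (nu u) (nu v)].

Definition fdeg (R : realFieldType) (n : nat) (mu : 'I_n -> 'I_n -> R) (v : 'I_n) : R :=
  \sum_(u < n | u != v) mu v u.

Definition fsize (R : realFieldType) (n : nat) (mu : 'I_n -> 'I_n -> R) : R :=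
  \sum_(u < n) \sum_(v < n | (u < v)%N) mu u v.

Definition flambda (R : realFieldType) (n : nat) (mu : 'I_n -> 'I_n -> R) : R :=
  2 * fsize mu / n%:R.

Definition fsigma (R : realFieldType) (n : nat) (mu : 'I_n -> 'I_n -> R) : R :=
  (\sum_(v < n) (fdeg mu v - flambda mu) ^+ 2) / n%:R.

(* Main.v *)
Require Import Defs.
From HB Require Import structures.
From mathcomp Require Import all_boot all_order all_algebra.
From mathcomp Require Import ring lra.
Import Order.TTheory GRing.Theory Num.Theory.
Local Open Scope ring_scope.
Set Implicit Arguments. Unset Strict Implicit.

Definition gg (R : realFieldType) (n : nat) (mu : 'I_n -> 'I_n -> R) (a b : 'I_n) : R :=
  if b != a then mu a b else 0.

Lemma gg_diag (R : realFieldType) n (mu : 'I_n -> 'I_n -> R) a : gg mu a a = 0.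
Proof. by rewrite /gg eqxx. Qed.

Lemma gg_sym (R : realFieldType) n (mu : 'I_n -> 'I_n -> R) :
  (forall u v, mu u v = mu v u) -> forall a b, gg mu a b = gg mu b a.
Proof. by move=> ms a b; rewrite /gg [b == a]eq_sym ms. Qed.

Lemma gg_ge0 (R : realFieldType) n (mu : 'I_n -> 'I_n -> R) :
  (forall u v, 0 <= mu u v) -> forall a b, 0 <= gg mu a b.
Proof. by move=> mp a b; rewrite /gg; case: ifP. Qed.

Lemma fdegE (R : realFieldType) n (mu : 'I_n -> 'I_n -> R) a :
  fdeg mu a = \sum_b gg mu a b.
Proof. by rewrite /fdeg big_mkcond. Qed.

Lemma Msize (R : realFieldType) n (mu : 'I_n -> 'I_n -> R) :
  (forall u v, mu u v = mu v u) ->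
  \sum_a \sum_b gg mu a b = 2 * fsize mu.
Proof.
move=> ms.
have E a : \sum_b gg mu a b =
   \sum_(b : 'I_n | (a < b)%N) mu a b + \sum_(b : 'I_n) (if (b < a)%N then mu a b else 0).
  rewrite (bigID (fun b : 'I_n => (a < b)%N)) /=; congr (_ + _).
    apply: eq_bigr => b hab; rewrite /gg ifT //.
    by apply/eqP => Eb; move: hab; rewrite Eb ltnn.
  rewrite big_mkcond; apply: eq_bigr => b _; rewrite /gg.
  case: (ltngtP a b) => h /=.
  - by [].
  - by rewrite ifT //; apply/eqP => Eb; move: h; rewrite Eb ltnn.
  - have Eb : b = a by apply: val_inj; rewrite /= h.
    by rewrite Eb eqxx.
under eq_bigr => a _ do rewrite E.
rewrite big_split /=.
rewrite exchange_big /=.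
have -> : \sum_(j : 'I_n) \sum_(i : 'I_n) (if (j < i)%N then mu i j else 0) = fsize mu.
  rewrite /fsize; apply: eq_bigr => j _; rewrite [in RHS]big_mkcond; apply: eq_bigr => i _.
  by case: ifP => // _; rewrite ms.
by rewrite /fsize; ring.
Qed.

Lemma Mdecomp (R : realFieldType) n (mu : 'I_n -> 'I_n -> R) :
  (forall u v, mu u v = mu v u) -> forall a,
  \sum_c \sum_d gg mu c d = 2 * \sum_b gg mu a b +
     \sum_(c | c != a) \sum_(d | d != a) gg mu c d.
Proof.
move=> ms a.
rewrite (bigD1 a) //=.
have -> : \sum_(c | c != a) \sum_d gg mu c d =
   \sum_(c | c != a) (gg mu c a + \sum_(d | d != a) gg mu c d).
  by apply: eq_bigr => c _; rewrite (bigD1 a).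
rewrite big_split /=.
have -> : \sum_(c | c != a) gg mu c a = \sum_b gg mu a b.
  rewrite [in RHS](bigD1 a) //= gg_diag add0r.
  by apply: eq_bigr => c _; rewrite gg_sym.
ring.
Qed.

Theorem theorem3p2 (R : realFieldType) (n : nat) (nu : 'I_n -> R)
  (mu : 'I_n -> 'I_n -> R) :
  (2 <= n)%N -> is_fuzzy_graph nu mu ->
  fsigma mu <= 2 * fsize mu ^+ 2 / n%:R * (1 - 2 / n%:R) /\
  (fsigma mu = 2 * fsize mu ^+ 2 / n%:R * (1 - 2 / n%:R) <->
   exists u v : 'I_n, [/\ u != v, mu u v = fsize mu &
     forall x y : 'I_n, x != y -> ~ ((x == u) && (y == v) || (x == v) && (y == u)) ->
       mu x y = 0]).
Proof.
move=> n2 [_ m01 ms _].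
have mp u v : 0 <= mu u v by case/andP: (m01 u v).
set e := fsize mu.
pose d a := \sum_b gg mu a b.
pose S a := \sum_(c | c != a) \sum_(dd | dd != a) gg mu c dd.
have dge0 a : 0 <= d a by apply: sumr_ge0 => b _; apply: gg_ge0.
have Sge0 a : 0 <= S a by apply: sumr_ge0 => c _; apply: sumr_ge0 => b _; apply: gg_ge0.
pose P := \sum_a d a * S a.
pose Q := \sum_a d a ^+ 2.
have Pge0 : 0 <= P by apply: sumr_ge0 => a _; apply: mulr_ge0.
have HM : \sum_a d a = 2 * e by apply: Msize.
have HMa a : 2 * e = 2 * d a + S a by rewrite -HM; apply: Mdecomp.
have key : 4 * e ^+ 2 = 2 * Q + P.
  have -> : 4 * e ^+ 2 = (\sum_a d a) * (2 * e) by rewrite HM; ring.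
  rewrite mulr_suml /Q /P mulr_sumr -big_split /=; apply: eq_bigr => a _.
  by rewrite (HMa a); ring.
have n0 : n%:R != 0 :> R by rewrite pnatr_eq0; by case: (n) n2.
have sig : fsigma mu = 2 * e ^+ 2 / n%:R * (1 - 2 / n%:R) - P / (2 * n%:R).
  rewrite /fsigma /flambda -/e.
  rewrite (eq_bigr (fun v => d v ^+ 2 - (2 * (2 * e / n%:R)) * d v + (2 * e / n%:R) ^+ 2));
    last by move=> v _; rewrite fdegE -/(d v); ring.
  rewrite big_split sumrB /= -mulr_sumr -/Q HM sumr_const card_ord.
  have -> : P = 4 * e ^+ 2 - 2 * Q by rewrite key; ring.
  rewrite -mulr_natr; field; exact: n0.
split.
  rewrite sig lerBlDr lerDl; apply: divr_ge0 => //; apply: mulr_ge0 => //; exact: ler0n.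
rewrite sig.
set X := 2 * e ^+ 2 / n%:R * (1 - 2 / n%:R).
have gE x y : x != y -> mu x y = gg mu x y by move=> xy; rewrite /gg eq_sym xy.
split.
- move=> H.
  have P0 : P = 0.
    have : P / (2 * n%:R) = 0.
      apply/eqP; rewrite -oppr_eq0; apply/eqP; apply: (addrI X); rewrite addr0; exact: H.
    move/eqP; rewrite mulf_eq0 invr_eq0 mulf_eq0 pnatr_eq0 (negbTE n0) /= orbF.
    by move/eqP.
  have hP := psumr_eq0P (fun a _ => mulr_ge0 (dge0 a) (Sge0 a)) P0.
  have alt a : (forall b, gg mu a b = 0) \/
      (forall c dd, c != a -> dd != a -> gg mu c dd = 0).
    move: (hP a isT) => /eqP; rewrite mulf_eq0 => /orP [/eqP da|/eqP Sa].
      by left => b; exact: (psumr_eq0P (fun b _ => gg_ge0 mp a b) da).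
    right => c dd ca da.
    have h := psumr_eq0P (fun c _ => sumr_ge0 _ (fun dd _ => gg_ge0 mp c dd)) Sa ca.
    exact: (psumr_eq0P (fun dd _ => gg_ge0 mp c dd) h da).
  case: (boolP [exists u, exists v, gg mu u v != 0]) =>
      [/existsP [u /existsP [v guv]]| /existsPn hall].
  + have vu : v != u by apply: contraNneq guv => ->; rewrite gg_diag.
    have hu : forall c dd, c != u -> dd != u -> gg mu c dd = 0.
      by case: (alt u) => // h; move: guv; rewrite h eqxx.
    have hv : forall c dd, c != v -> dd != v -> gg mu c dd = 0.
      by case: (alt v) => // h; move: guv; rewrite gg_sym // h eqxx.
    have uv : u != v by rewrite eq_sym.
    exists u, v; split => //.
    * have Su : S u = 0 by apply: big1 => c cu; apply: big1 => dd du; exact: hu.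
      have du : d u = gg mu u v.
        by rewrite /d (bigD1 v) //= big1 ?addr0 // => b bv; exact: hv.
      move: (HMa u); rewrite Su du addr0 => h.
      rewrite (gE u v uv); lra.
    * move=> x y xy np; rewrite gE //.
      have [hxu|] := boolP ((x != u) && (y != u)).
        by case/andP: hxu; apply: hu.
      rewrite negb_and !negbK => Hu.
      have [hxv|] := boolP ((x != v) && (y != v)).
        by case/andP: hxv; apply: hv.
      rewrite negb_and !negbK => Hv.
      exfalso; apply: np.
      case/orP: Hu => /eqP Eu; case/orP: Hv => /eqP Ev; subst.
      all: try by rewrite ?eqxx ?orbT in xy *.
      all: try by [rewrite eqxx in vu | rewrite eqxx in uv].
  + have g0 a b : gg mu a b = 0.
      by move/existsPn: (hall a) => /(_ b) /negPn /eqP.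
    have e0 : e = 0.
      have : \sum_a d a = 0 by apply: big1 => a _; apply: big1 => b _; exact: g0.
      rewrite HM => h; lra.
    pose u0 : 'I_n := Ordinal (ltnW n2).
    pose v0 : 'I_n := Ordinal n2.
    have uv : u0 != v0 by [].
    exists u0, v0; split => //.
      by rewrite gE // g0 e0.
    by move=> x y xy _; rewrite gE // g0.
- move=> [u [v [uv muv hoth]]].
  have g0 x y : ~~ ((x==u)&&(y==v) || (x==v)&&(y==u)) -> gg mu x y = 0.
    move=> h; rewrite /gg; case: ifP => // yx; apply: hoth; last exact/negP.
    by rewrite eq_sym yx.
  suff P0 : P = 0 by rewrite P0 mul0r subr0.
  apply: big1 => a _.
  case: (boolP ((a == u) || (a == v))) => ha.
    rewrite /S big1 ?mulr0 // => c ca; apply: big1 => dd da; apply: g0.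
    by case/orP: ha => /eqP E; subst a; rewrite (negbTE ca) (negbTE da) /= ?andbF.
  rewrite /d big1 ?mul0r // => b _; apply: g0.
  rewrite negb_or in ha; case/andP: ha => au av.
  by rewrite (negbTE au) (negbTE av).
Qed.
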